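(* Consider the parallel multiple access channel power allocation game and the replicator dynamics described in the context. Let $q\in\Delta$ be the (almost surely unique) Nash equilibrium of the game. Then every solution orbit $p(t)$ of the replicator dynamics whose initial point $p(0)$ has finite Kullback–Leibler divergence $H_q(p(0))<\infty$ converges to $q$ as $t\to\infty$. Furthermore, even if the game does not admit a unique Nash equilibrium, every solution trajectory starting in the interior of $\Delta$ converges to a Nash equilibrium (a single point, not merely to the set of Nash equilibria).
   Context: Setting: users $\mathcal{K}=\{1,\dots,K\}$, nodes $\mathcal{A}=\{1,\dots,A\}$. User $k$ has maximum power $P_k>0$ and strategy set $\Delta_k=\{p_k\in\mathbb{R}^{\mathcal{A}}: p_{k\alpha}\ge 0,\ \sum_\alpha p_{k\alpha}=P_k\}$; $\Delta=\prod_k\Delta_k$. Payoffs: $u_k(p)=\sum_{\alpha} b_\alpha\log\bigl(1+\frac{g_{k\alpha}p_{k\alpha}}{\sigma_\alpha^2+\sum_{\ell\neq k}g_{\ell\alpha}p_{\ell\alpha}}\bigr)$ with constants $b_\alpha>0$, $\sigma_\alpha^2>0$ and channel gains $g_{k\alpha}>0$ drawn from a continuous (nonatomic) probability distribution on the positive reals. $q\in\Delta$ is a Nash equilibrium if $u_k(q)\ge u_k(q_{-k};q_k')$ for all $k$ and $q_k'\in\Delta_k$. Define $v_{k\alpha}(p)=\frac{b_\alpha g_{k\alpha}}{\sigma_\alpha^2+\sum_{\ell}g_{\ell\alpha}p_{\ell\alpha}}$ and $v_k(p)=P_k^{-1}\sum_\beta p_{k\beta}v_{k\beta}(p)$. The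 replicator dynamics are the ODE $\frac{dp_{k\alpha}}{dt}=p_{k\alpha}\bigl(v_{k\alpha}(p(t))-v_k(p(t))\bigr)$ on $\Delta$. The Kullback–Leibler divergence of $p$ with respect to $q$ is $H_q(p)=\sum_{k,\alpha}q_{k\alpha}\log(q_{k\alpha}/p_{k\alpha})$ (terms with $q_{k\alpha}=0$ are zero), finite iff $p_{k\alpha}>0$ whenever $q_{k\alpha}>0$. *)

(* Defs.v *)
From HB Require Import structures.
From mathcomp Require Import all_boot all_order all_algebra.
From mathcomp Require Import all_classical all_reals all_analysis.
Set Implicit Arguments. Unset Strict Implicit. Unset Printing Implicit Defensive.
Import Order.TTheory GRing.Theory Num.Theory.
Import numFieldNormedType.Exports.
Local Open Scope classical_set_scope.
Local Open Scope ring_scope.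

Section PMAC.
Variables (R : realType) (K A : nat).
(* P k : max power of user k; b a, sigma2 a : constants b_alpha, sigma_alpha^2;
   g k a : channel gain g_{k alpha}. *)
Variables (P : 'I_K -> R) (b sigma2 : 'I_A -> R) (g : 'I_K -> 'I_A -> R).

Definition profile := 'I_K -> 'I_A -> R.

Definition in_Delta_k (k : 'I_K) (pk : 'I_A -> R) : Prop :=
  (forall a, 0 <= pk a) /\ \sum_(a < A) pk a = P k.

Definition in_Delta (p : profile) : Prop := forall k, in_Delta_k k (p k).

Definition in_interior (p : profile) : Prop :=
  in_Delta p /\ forall k a, 0 < p k a.

Definition payoff (k : 'I_K) (p : profile) : R :=
  \sum_(a < A) b a * ln (1 + g k a * p k a /
       (sigma2 a + \sum_(l < K | l != k) g l a * p l a)).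

Definition deviate (q : profile) (k : 'I_K) (qk' : 'I_A -> R) : profile :=
  fun l => if l == k then qk' else q l.

Definition is_NE (q : profile) : Prop :=
  in_Delta q /\
  forall k (qk' : 'I_A -> R), in_Delta_k k qk' -> payoff k (deviate q k qk') <= payoff k q.

Definition vka (p : profile) (k : 'I_K) (a : 'I_A) : R :=
  b a * g k a / (sigma2 a + \sum_(l < K) g l a * p l a).

Definition vk (p : profile) (k : 'I_K) : R :=
  (P k)^-1 * \sum_(a < A) p k a * vka p k a.

Definition replicator_solution (p : R -> profile) : Prop :=
  (forall t : R, 0 <= t -> in_Delta (p t)) /\
  (forall (k : 'I_K) (a : 'I_A), {within `[0, +oo[, continuous (fun t => p t k a)}) /\
  (forall t : R, 0 < t -> forall (k : 'I_K) (a : 'I_A),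
      is_derive t (1 : R) (fun s => p s k a) (p t k a * (vka (p t) k a - vk (p t) k))).

Definition KL (q p : profile) : \bar R :=
  (\sum_(k < K) \sum_(a < A)
     (if (q k a == 0)%R then 0%E
      else if (p k a == 0)%R then +oo%E
      else (q k a * ln (q k a / p k a))%R%:E))%E.

Definition converges_to (p : R -> profile) (q : profile) : Prop :=
  forall (k : 'I_K) (a : 'I_A), (fun t : R => p t k a) @ +oo --> q k a.

End PMAC.

(* Main.v *)
Require Import Defs.
From HB Require Import structures.
From mathcomp Require Import all_boot all_order all_algebra.
From mathcomp Require Import all_classical all_reals all_analysis.
From mathcomp Require Import lra ring.
Import Order.TTheory GRing.Theory Num.Theory.
Import numFieldNormedType.Exports.
Local Open Scope ring_scope.

Section Proof.
Variables (R : realType) (K A : nat).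
Variables (P : 'I_K -> R) (b sigma2 : 'I_A -> R) (g : 'I_K -> 'I_A -> R).
Hypothesis HP : forall k, 0 < P k.
Hypothesis Hb : forall a, 0 < b a.
Hypothesis Hs : forall a, 0 < sigma2 a.
Hypothesis Hg : forall k a, 0 < g k a.

Definition Sld (p : profile R K A) a := sigma2 a + \sum_(l < K) g l a * p l a.
Definition Yk (p : profile R K A) k a :=
  sigma2 a + \sum_(l < K | l != k) g l a * p l a.
Definition Phi (p : profile R K A) := \sum_(a < A) b a * ln (Sld p a).
Definition nonneg (p : profile R K A) := forall k a, 0 <= p k a.

Lemma ln_le_sub1 {x : R} : 0 < x -> ln x <= x - 1.
Proof.
move=> x0; have := @le_ln1Dx R (x - 1).
rewrite addrCA subrr addr0; apply; lra.
Qed.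

Lemma S_gt0 p a : nonneg p -> 0 < Sld p a.
Proof.
move=> np; rewrite /Sld; apply: ltr_wpDr => //.
by apply: sumr_ge0 => l _; apply: mulr_ge0 => //; apply: ltW.
Qed.

Lemma Yk_gt0 p k a : nonneg p -> 0 < Yk p k a.
Proof.
move=> np; rewrite /Yk; apply: ltr_wpDr => //.
by apply: sumr_ge0 => l _; apply: mulr_ge0 => //; apply: ltW.
Qed.

Lemma S_Yk p k a : Sld p a = Yk p k a + g k a * p k a.
Proof. rewrite /Sld /Yk (bigD1 k) //=; lra. Qed.

Lemma lnB (x y : R) : 0 < x -> 0 < y -> ln (x / y) = ln x - ln y.
Proof.
move=> x0 y0; rewrite lnM ?posrE ?invr_gt0 // lnV ?posrE //.
Qed.

Lemma payoffE p k : nonneg p ->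
  payoff b sigma2 g k p = Phi p - \sum_(a < A) b a * ln (Yk p k a).
Proof.
move=> np; rewrite /payoff /Phi -sumrB; apply: eq_bigr => a _.
rewrite -mulrBr; congr (_ * _).
have Y0 := Yk_gt0 p k a np.
rewrite (S_Yk p k) -lnB //; last by rewrite -S_Yk; apply: S_gt0.
congr ln; rewrite /Yk; field; rewrite -/(Yk p k a); lra.
Qed.

Lemma Yk_deviate q k x a : Yk (deviate q k x) k a = Yk q k a.
Proof.
rewrite /Yk; congr (_ + _); apply: eq_bigr => l lk.
by rewrite /deviate (negbTE lk).
Qed.

Lemma max_NE q : in_Delta P q ->
  (forall x, in_Delta P x -> Phi x <= Phi q) -> is_NE P b sigma2 g q.
Proof.
move=> Dq qmax; split => // k x Dx.
have Dd : in_Delta P (deviate q k x).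
  by move=> l; rewrite /deviate; case: eqP => [->|].
have nn : forall p, in_Delta P p -> nonneg p by move=> p Dp l a; case: (Dp l).
rewrite !payoffE ?nn //.
under eq_bigr do rewrite Yk_deviate.
by rewrite lerD2r; apply: qmax.
by apply: nn.
by apply: nn.
Qed.

Lemma concave_Phi p q : nonneg p -> nonneg q ->
  Phi q <= Phi p + \sum_(k < K) \sum_(a < A) vka b sigma2 g p k a * (q k a - p k a).
Proof.
move=> np nq; rewrite /Phi exchange_big -big_split /=; apply: ler_sum => a _.
have Sp := S_gt0 p a np; have Sq := S_gt0 q a nq.
have -> : \sum_(k < K) vka b sigma2 g p k a * (q k a - p k a) =
    b a / Sld p a * (Sld q a - Sld p a).
  have e : Sld q a - Sld p a = \sum_(k < K) g k a * (q k a - p k a).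
    rewrite /Sld; under [RHS]eq_bigr do rewrite mulrBr; rewrite sumrB; lra.
  rewrite e mulr_sumr; apply: eq_bigr => k _.
  by rewrite /vka -/(Sld p a); field; lra.
have := ln_le_sub1 (divr_gt0 Sq Sp); rewrite lnB // => h.
have hb := Hb a.
have : b a * (ln (Sld q a) - ln (Sld p a)) <= b a * (Sld q a / Sld p a - 1).
  by rewrite ler_pM2l.
have -> : b a / Sld p a * (Sld q a - Sld p a) = b a * (Sld q a / Sld p a - 1).
  by field; lra.
lra.
Qed.

Lemma KL_deriv_alg p q : in_Delta P p -> in_Delta P q ->
  \sum_(k < K) \sum_(a < A) q k a * (vka b sigma2 g p k a - vk P b sigma2 g p k)
  = \sum_(k < K) \sum_(a < A) q k a * vka b sigma2 g p k a
  - \sum_(k < K) \sum_(a < A) p k a * vka b sigma2 g p k a.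
Proof.
move=> Dp Dq; rewrite -sumrB; apply: eq_bigr => k _.
under eq_bigr do rewrite mulrBr.
rewrite sumrB -mulr_suml; case: (Dq k) => _ ->.
congr (_ - _); rewrite /vk; field.
by have := HP k; rewrite lt0r => /andP[].
Qed.


Lemma le_sum1 (I : finType) (F : I -> R) i :
  (forall j, 0 <= F j) -> F i <= \sum_j F j.
Proof.
move=> h; rewrite (bigD1 i) //= lerDl; apply: sumr_ge0 => j _; exact: h.
Qed.

Definition Bv := \sum_(k < K) \sum_(a < A) b a * g k a / sigma2 a.

Lemma Delta_nonneg p : in_Delta P p -> nonneg p.
Proof. by move=> Dp l a; case: (Dp l). Qed.

Lemma vka_ge0 p k a : nonneg p -> 0 <= vka b sigma2 g p k a.
Proof.
move=> np; rewrite /vka -/(Sld p a); apply: divr_ge0.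
  by apply: mulr_ge0; apply: ltW.
exact: ltW (S_gt0 p a np).
Qed.

Lemma vka_le p k a : nonneg p -> vka b sigma2 g p k a <= Bv.
Proof.
move=> np; rewrite /vka -/(Sld p a).
have h1 : b a * g k a / Sld p a <= b a * g k a / sigma2 a.
  rewrite ler_pM2l; last by apply: mulr_gt0.
  rewrite lef_pV2 ?posrE ?S_gt0 //.
  rewrite /Sld lerDl; apply: sumr_ge0 => l _; apply: mulr_ge0 => //.
  exact: ltW.
apply: (le_trans h1); rewrite /Bv.
have hh : forall k' a', 0 <= b a' * g k' a' / sigma2 a'.
  move=> k' a'; apply: divr_ge0; last exact: ltW.
  by apply: mulr_ge0; apply: ltW.
apply: le_trans (@le_sum1 _ (fun k' => \sum_(a' < A) b a' * g k' a' / sigma2 a') k _).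
  exact: (@le_sum1 _ (fun a' => b a' * g k a' / sigma2 a')).
by move=> j; apply: sumr_ge0.
Qed.

Lemma Bv_ge0 : 0 <= Bv.
Proof.
apply: sumr_ge0 => k _; apply: sumr_ge0 => a _; apply: divr_ge0; last exact: ltW.
by apply: mulr_ge0; apply: ltW.
Qed.

Lemma vk_le p k : in_Delta P p -> vk P b sigma2 g p k <= Bv.
Proof.
move=> Dp; have np := Delta_nonneg p Dp; rewrite /vk.
have Pk := HP k.
rewrite ler_pdivrMl //.
apply: le_trans (_ : \sum_(a < A) p k a * Bv <= _).
  by apply: ler_sum => a _; apply: ler_wpM2l => //; apply: vka_le.
by rewrite -mulr_suml; case: (Dp k) => _ ->.
Qed.

Lemma vk_ge0 p k : in_Delta P p -> 0 <= vk P b sigma2 g p k.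
Proof.
move=> Dp; have np := Delta_nonneg p Dp; rewrite /vk.
apply: mulr_ge0; first by rewrite invr_ge0; apply: ltW.
by apply: sumr_ge0 => a _; apply: mulr_ge0 => //; apply: vka_ge0.
Qed.

Lemma sol_pos p k a : replicator_solution P b sigma2 g p -> 0 < p 0 k a ->
  forall t, 0 <= t -> 0 < p t k a.
Proof.
move=> [D [C Der]] p0 t t0.
pose f := fun s => p s k a * expR (Bv * s).
have hd : forall x : R, 0 < x -> is_derive x 1 f
   (p x k a * (expR (Bv * x) * Bv) + expR (Bv * x) *
      (p x k a * (vka b sigma2 g (p x) k a - vk P b sigma2 g (p x) k))).
  move=> x x0; have hf := Der x x0 k a.
  have he : is_derive x 1 (fun s => expR (Bv * s)) (expR (Bv * x) * Bv).
    have hl : is_derive x (1:R) (fun s : R => Bv * s) Bv.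
      by apply: is_derive_eq; rewrite /GRing.scale /= mulr1.
    exact: (is_derive1_comp (f:=expR) (g:=fun s => Bv * s)).
  by have := is_deriveM hf he.
have H1 : forall x, x \in `]0, +oo[%R -> derivable f x 1.
  by move=> x; rewrite in_itv /= andbT => x0; have [] := hd x x0.
have H2 : forall x, x \in `]0, +oo[%R -> 0 <= derive1 f x.
  move=> x; rewrite in_itv /= andbT => x0.
  rewrite derive1E (@derive_val _ _ _ _ _ _ _ (hd x x0)).
  have Dx := D x (ltW x0); have nx := Delta_nonneg (p x) Dx.
  have e0 := expR_gt0 (Bv * x).
  have v1 := vka_ge0 (p x) k a nx; have v2 := vk_le (p x) k Dx.
  have h : 0 <= p x k a * (Bv + vka b sigma2 g (p x) k a - vk P b sigma2 g (p x) k).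
    by apply: mulr_ge0 => //; lra.
  have -> : p x k a * (expR (Bv * x) * Bv) + expR (Bv * x) *
      (p x k a * (vka b sigma2 g (p x) k a - vk P b sigma2 g (p x) k)) =
      expR (Bv * x) * (p x k a * (Bv + vka b sigma2 g (p x) k a - vk P b sigma2 g (p x) k)).
    by ring.
  by apply: mulr_ge0 => //; apply: ltW.
have H3 : {within `[0, +oo[, continuous f}%classic.
  have ce : {within `[0, +oo[, continuous (fun s => expR (Bv * s))}%classic.
    apply: (continuous_subspaceT (f := fun s => expR (Bv * s))) => y.
    apply: (continuous_comp (f := fun s => Bv * s)); last exact: continuous_expR.
    by apply: continuousM; [apply: cst_continuous | exact: cvg_id].
  move=> x; exact: (continuousM (C k a x) (ce x)).
have := @ger0_derive1_ndecry R f 0 H1 H2 H3 0 t (lexx _) t0.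
rewrite /f mulr0 expR0 mulr1 => h.
have := lt_le_trans p0 h.
by rewrite pmulr_lgt0 // expR_gt0.
Qed.

Lemma is_derive_bigsum (I : Type) (r : seq I) (Pr : pred I) (h : I -> R -> R)
   (dh : I -> R) (t : R) :
  (forall i, Pr i -> is_derive t 1 (h i) (dh i)) ->
  is_derive t 1 (fun s => \sum_(i <- r | Pr i) h i s) (\sum_(i <- r | Pr i) dh i).
Proof.
elim: r => [|i r IH] H.
  have -> : (fun s => \sum_(i <- [::] | Pr i) h i s) = cst 0.
    by apply: funext => s; rewrite big_nil.
  by rewrite big_nil; apply: is_derive_cst.
rewrite big_cons.
case Pi: (Pr i).
  have -> : (fun s => \sum_(j <- i :: r | Pr j) h j s) =
      (fun s => h i s + \sum_(j <- r | Pr j) h j s).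
    by apply: funext => s; rewrite big_cons Pi.
  by have := is_deriveD (H i Pi) (IH H).
have -> : (fun s => \sum_(j <- i :: r | Pr j) h j s) =
    (fun s => \sum_(j <- r | Pr j) h j s).
  by apply: funext => s; rewrite big_cons Pi.
exact: IH.
Qed.

Lemma cont_bigsum (T : topologicalType) (I : Type) (r : seq I) (Pr : pred I)
   (h : I -> T -> R) (x : T) :
  (forall i, Pr i -> {for x, continuous (h i)}) ->
  {for x, continuous (fun s => \sum_(i <- r | Pr i) h i s)}.
Proof.
elim: r => [|i r IH] H.
  have -> : (fun s => \sum_(i <- [::] | Pr i) h i s) = cst 0.
    by apply: funext => s; rewrite big_nil.
  exact: cst_continuous.
case Pi: (Pr i).
  have -> : (fun s => \sum_(j <- i :: r | Pr j) h j s) =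
      (fun s => h i s + \sum_(j <- r | Pr j) h j s).
    by apply: funext => s; rewrite big_cons Pi.
  exact: (continuousD (H i Pi) (IH H)).
have -> : (fun s => \sum_(j <- i :: r | Pr j) h j s) =
    (fun s => \sum_(j <- r | Pr j) h j s).
  by apply: funext => s; rewrite big_cons Pi.
exact: IH.
Qed.

Definition Hterm (q p : R) := if q == 0 then 0 else q * (ln q - ln p).
Definition Hq (q p : profile R K A) :=
  \sum_(k < K) \sum_(a < A) Hterm (q k a) (p k a).

Lemma term_bound (q p : R) : 0 <= q -> 0 <= p -> (q != 0 -> 0 < p) ->
  (Num.sqrt p - Num.sqrt q) ^+ 2 <= Hterm q p - q + p.
Proof.
move=> q0 p0 qp; rewrite /Hterm; case: eqP => [->|/eqP qn0].
  by rewrite sqrtr0 subr0 sqr_sqrtr // subr0 add0r.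
have pp := qp qn0; have qq : 0 < q by rewrite lt0r qn0.
set sp := Num.sqrt p; set sq := Num.sqrt q.
have sp0 : 0 < sp by rewrite sqrtr_gt0.
have sq0 : 0 < sq by rewrite sqrtr_gt0.
have ep : p = sp ^+ 2 by rewrite sqr_sqrtr.
have eq : q = sq ^+ 2 by rewrite sqr_sqrtr.
have lp : ln p = ln sp *+ 2 by rewrite ep lnXn.
have lq : ln q = ln sq *+ 2 by rewrite eq lnXn.
have h := ln_le_sub1 (divr_gt0 sp0 sq0); rewrite lnB // in h.
have h2 : 2 * q * (ln sp - ln sq) <= 2 * q * (sp / sq - 1).
  by rewrite ler_pM2l //; lra.
have e2 : 2 * q * (sp / sq - 1) = 2 * sq * sp - 2 * q.
  by rewrite eq; field; lra.
have e1 : q * (ln q - ln p) = - (2 * q * (ln sp - ln sq)).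
  by rewrite lp lq !mulr2n; ring.
rewrite e1; rewrite e2 in h2.
nra.
Qed.

Definition supp (q p : profile R K A) := forall k a, q k a != 0 -> 0 < p k a.

Lemma Hq_lower q p : in_Delta P p -> in_Delta P q -> supp q p ->
  \sum_(k < K) \sum_(a < A) (Num.sqrt (p k a) - Num.sqrt (q k a)) ^+ 2 <= Hq q p.
Proof.
move=> Dp Dq sqp.
have -> : Hq q p = \sum_(k < K) \sum_(a < A) (Hterm (q k a) (p k a) - q k a + p k a).
  apply: eq_bigr => k _; rewrite big_split sumrB /=.
  by case: (Dp k) => _ ->; case: (Dq k) => _ ->; rewrite subrK.
apply: ler_sum => k _; apply: ler_sum => a _; apply: term_bound.
- by case: (Dq k).
- by case: (Dp k).
- exact: sqp.
Qed.

Lemma Hq_ge0 q p : in_Delta P p -> in_Delta P q -> supp q p -> 0 <= Hq q p.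
Proof.
move=> Dp Dq sqp; apply: le_trans (Hq_lower q p Dp Dq sqp).
by apply: sumr_ge0 => k _; apply: sumr_ge0 => a _; apply: sqr_ge0.
Qed.

Lemma Hq_term q p k a : in_Delta P p -> in_Delta P q -> supp q p ->
  (Num.sqrt (p k a) - Num.sqrt (q k a)) ^+ 2 <= Hq q p.
Proof.
move=> Dp Dq sqp; apply: le_trans (Hq_lower q p Dp Dq sqp).
apply: le_trans (@le_sum1 _ (fun k' => \sum_(a' < A)
   (Num.sqrt (p k' a') - Num.sqrt (q k' a')) ^+ 2) k _).
  exact: (@le_sum1 _ (fun a' => (Num.sqrt (p k a') - Num.sqrt (q k a')) ^+ 2) a
     (fun j => sqr_ge0 _)).
by move=> j; apply: sumr_ge0 => a' _; apply: sqr_ge0.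
Qed.

Lemma Hterm_deriv q p k a t : replicator_solution P b sigma2 g p -> 0 < t ->
  (q != 0 -> 0 < p t k a) ->
  is_derive t 1 (fun s => Hterm q (p s k a))
    (- (q * (vka b sigma2 g (p t) k a - vk P b sigma2 g (p t) k))).
Proof.
move=> [_ [_ Der]] t0 qp; rewrite /Hterm; case: eqP => [->|/eqP qn0].
  by rewrite mul0r oppr0; apply: is_derive_cst.
have pt := qp qn0.
have hl : is_derive t 1 (fun s => ln (p s k a))
   ((p t k a)^-1 * (p t k a * (vka b sigma2 g (p t) k a - vk P b sigma2 g (p t) k))).
  by have := is_derive1_comp (f:=@ln R) (g:=fun s => p s k a) (is_derive1_ln pt) (Der t t0 k a).
apply: is_derive_eq.
rewrite /GRing.scale /=; field.
by rewrite gt_eqF.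
Qed.

Lemma Hq_deriv q p t : replicator_solution P b sigma2 g p -> 0 < t ->
  supp q (p t) ->
  is_derive t 1 (fun s => Hq q (p s))
    (- \sum_(k < K) \sum_(a < A)
         q k a * (vka b sigma2 g (p t) k a - vk P b sigma2 g (p t) k)).
Proof.
move=> sol t0 sp; rewrite /Hq -sumrN.
apply: (@is_derive_bigsum _ _ _ (fun k s => \sum_(a < A) Hterm (q k a) (p s k a))) => k _.
rewrite -sumrN.
apply: (@is_derive_bigsum _ _ _ (fun a s => Hterm (q k a) (p s k a))) => a _.
by apply: Hterm_deriv => //; apply: sp.
Qed.

Definition qmax (q : profile R K A) := in_Delta P q /\
  forall x, in_Delta P x -> Phi x <= Phi q.

Lemma supp_t q p t : replicator_solution P b sigma2 g p -> supp q (p 0) ->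
  0 <= t -> supp q (p t).
Proof. by move=> sol sq0 t0 k a qn; apply: sol_pos => //; apply: sq0. Qed.

Lemma deriv_bound q p : in_Delta P p -> qmax q ->
  - \sum_(k < K) \sum_(a < A)
       q k a * (vka b sigma2 g p k a - vk P b sigma2 g p k) <= Phi p - Phi q.
Proof.
move=> Dp [Dq _]; rewrite KL_deriv_alg //.
have := concave_Phi p q (Delta_nonneg p Dp) (Delta_nonneg q Dq).
have -> : \sum_(k < K) \sum_(a < A) vka b sigma2 g p k a * (q k a - p k a) =
   \sum_(k < K) \sum_(a < A) q k a * vka b sigma2 g p k a -
   \sum_(k < K) \sum_(a < A) p k a * vka b sigma2 g p k a.
  rewrite -sumrB; apply: eq_bigr => k _; rewrite -sumrB; apply: eq_bigr => a _.
  by ring.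
lra.
Qed.

Lemma Hmono q p c T : replicator_solution P b sigma2 g p -> qmax q ->
  supp q (p 0) -> 0 < T -> 0 <= c ->
  (forall t, T <= t -> Phi (p t) <= Phi q - c) ->
  forall x y, T <= x -> x <= y -> Hq q (p y) + c * y <= Hq q (p x) + c * x.
Proof.
move=> sol qm sq0 T0 c0 hc x y Tx xy.
pose f := fun s => Hq q (p s) + c * s.
have hd : forall s, T <= s -> is_derive s 1 f
   (- \sum_(k < K) \sum_(a < A)
       q k a * (vka b sigma2 g (p s) k a - vk P b sigma2 g (p s) k) + c).
  move=> s Ts; have s0 : 0 < s by apply: lt_le_trans Ts.
  have h1 := Hq_deriv q p s sol s0 (supp_t q p s sol sq0 (ltW s0)).
  have h2 : is_derive s (1:R) (fun s : R => c * s) c.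
    by apply: is_derive_eq; rewrite /GRing.scale /= mulr1.
  by have := is_deriveD h1 h2.
have H1 : forall s, s \in `]T, +oo[%R -> derivable f s 1.
  by move=> s; rewrite in_itv /= andbT => Ts; have [] := hd s (ltW Ts).
have H2 : forall s, s \in `]T, +oo[%R -> derive1 f s <= 0.
  move=> s; rewrite in_itv /= andbT => Ts.
  rewrite derive1E (@derive_val _ _ _ _ _ _ _ (hd s (ltW Ts))).
  have s0 : 0 <= s by apply: ltW; apply: lt_trans Ts.
  have := deriv_bound q (p s) (sol.1 s s0) qm.
  have := hc s (ltW Ts); lra.
have H3 : {within `[T, +oo[, continuous f}%classic.
  apply: derivable_within_continuous => s; rewrite in_itv /= andbT => Ts.
  by have [] := hd s Ts.
exact: (@ler0_derive1_nincry R f T H1 H2 H3 x y Tx xy).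
Qed.

Lemma near_max q p : replicator_solution P b sigma2 g p -> qmax q ->
  supp q (p 0) -> forall e, 0 < e -> forall T,
  exists t, T <= t /\ Phi q - e < Phi (p t).
Proof.
move=> sol qm sq0 e e0 T; apply: contrapT => H.
have h : forall t, Num.max T 1 <= t -> Phi (p t) <= Phi q - e.
  move=> t Tt; rewrite leNgt; apply/negP => lt; apply: H; exists t; split => //.
  by apply: le_trans Tt; rewrite le_max lexx.
have T0 : 0 < Num.max T 1 by rewrite lt_max ltr01 orbT.
have hm := Hmono q p e _ sol qm sq0 T0 (ltW e0) h.
set T' := Num.max T 1 in T0 h hm.
set C := Hq q (p T') + e * T'.
have C0 : 0 <= C.
  apply: addr_ge0; last by apply: mulr_ge0; apply: ltW.
  apply: Hq_ge0; [exact: sol.1 _ (ltW T0) | exact: qm.1 |].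
  exact: supp_t q p _ sol sq0 (ltW T0).
pose y := T' + C / e + 1.
have Ty : T' <= y.
  rewrite /y -addrA lerDl; apply: addr_ge0 => //; apply: divr_ge0 => //; exact: ltW.
have := hm T' y (lexx _) Ty.
have y0 : 0 <= y by apply: le_trans Ty; apply: ltW.
have Hy : 0 <= Hq q (p y).
  apply: Hq_ge0; [exact: sol.1 _ y0 | exact: qm.1 |].
  exact: supp_t q p _ sol sq0 y0.
have ey : e * y = e * T' + C + e by rewrite /y; field; rewrite gt_eqF.
have eT : 0 <= e * T' by apply: mulr_ge0; apply: ltW.
rewrite -/C ey; lra.
Qed.

Lemma conv_lemma q p : replicator_solution P b sigma2 g p -> qmax q ->
  supp q (p 0) ->
  (forall e, 0 < e -> forall T, exists t, T <= t /\ Hq q (p t) < e) ->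
  converges_to p q.
Proof.
move=> sol qm sq0 hH k a.
apply/cvgrPdist_lt => e e0.
have Pk := HP k.
pose d := e ^+ 2 / (4 * P k + 1).
have d0 : 0 < d by apply: divr_gt0; [apply: exprn_gt0 | lra].
have [t0 [t01 Ht0]] := hH d d0 1.
have t00 : 0 < t0 by apply: lt_le_trans t01.
exists t0; split; first exact: num_real.
move=> t /= tt0.
have t0t : t0 <= t by apply: ltW.
have tpos : 0 <= t by apply: le_trans t0t; apply: ltW.
have hc : forall s, t0 <= s -> Phi (p s) <= Phi q - 0.
  move=> s ts; rewrite subr0; apply: qm.2; apply: sol.1.
  by apply: le_trans ts; apply: ltW.
have hm := Hmono q p 0 t0 sol qm sq0 t00 (lexx 0) hc t0 t (lexx _) t0t.
rewrite !mul0r !addr0 in hm.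
have Dt := sol.1 t tpos.
have bt := Hq_term q (p t) k a Dt qm.1 (supp_t q p t sol sq0 tpos).
have hd : (Num.sqrt (p t k a) - Num.sqrt (q k a)) ^+ 2 < d.
  by apply: le_lt_trans bt _; apply: le_lt_trans hm Ht0.
have pt0 : 0 <= p t k a by case: (Dt k).
have q0 : 0 <= q k a by case: (qm.1 k).
have ptP : p t k a <= P k.
  case: (Dt k) => h0 <-; exact: (@le_sum1 _ (fun a' => p t k a') a h0).
have qP : q k a <= P k.
  case: (qm.1 k) => h0 <-; exact: (@le_sum1 _ (fun a' => q k a') a h0).
set u := Num.sqrt (p t k a) in hd; set w := Num.sqrt (q k a) in hd.
have u0 : 0 <= u by apply: sqrtr_ge0.
have w0 : 0 <= w by apply: sqrtr_ge0.
have eu : p t k a = u ^+ 2 by rewrite sqr_sqrtr.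
have ew : q k a = w ^+ 2 by rewrite sqr_sqrtr.
have e1 : (q k a - p t k a) ^+ 2 = (u - w) ^+ 2 * (u + w) ^+ 2.
  by rewrite eu ew; ring.
have e2 : (u + w) ^+ 2 <= 4 * P k.
  have : (u + w) ^+ 2 <= 2 * (u ^+ 2 + w ^+ 2).
    have := sqr_ge0 (u - w); rewrite !expr2; lra.
  rewrite -eu -ew; lra.
have e3 : (u - w) ^+ 2 * (u + w) ^+ 2 <= d * (4 * P k).
  by apply: ler_pM => //; [apply: sqr_ge0 | apply: sqr_ge0 | apply: ltW].
have e4 : d * (4 * P k) < e ^+ 2.
  rewrite /d; have ee := exprn_gt0 2 e0.
  rewrite mulrAC ltr_pdivrMr; last lra.
  have : e ^+ 2 * (4 * P k) < e ^+ 2 * (4 * P k + 1).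
    by rewrite ltr_pM2l //; lra.
  lra.
have hsq : (q k a - p t k a) ^+ 2 < e ^+ 2.
  by rewrite e1; apply: le_lt_trans e3 e4.
rewrite ltr_norml; move: hsq; rewrite !expr2 => hsq.
apply/andP; split; nra.
Qed.

Lemma KL_supp q p : nonneg p -> (KL q p < +oo)%E -> supp q p.
Proof.
move=> np hKL k a qn; rewrite lt_def np andbT; apply/eqP => p0.
move: hKL; rewrite /KL.
have hin : forall k' a', (if q k' a' == 0%R then 0%E else if p k' a' == 0%R then +oo%E
      else (q k' a' * ln (q k' a' / p k' a'))%:E) != -oo%E.
  by move=> k' a'; case: ifP => //; case: ifP.
have -> : (\sum_(k' < K) \sum_(a' < A)
     (if q k' a' == 0%R then 0%E else if p k' a' == 0%R then +oo%E
      else (q k' a' * ln (q k' a' / p k' a'))%:E))%E = +oo%E.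
  apply/esum_eqyP.
    move=> k' _; apply/negP => /eqP /esum_eqNyP [a' [_ _ h]].
    by move: (hin k' a'); rewrite h eqxx.
  exists k; split => //.
  apply/esum_eqyP; first by move=> a' _; apply: hin.
  exists a; split => //.
  by rewrite (negbTE qn) p0 eqxx.
by rewrite ltxx.
Qed.

Local Open Scope classical_set_scope.

Definition psi (v : 'rV[R]_(K * A)) : profile R K A :=
  fun k a => v 0 (mxvec_index k a).
Definition phi (p : profile R K A) : 'rV[R]_(K * A) :=
  mxvec (\matrix_(k, a) p k a).

Lemma psi_phi p : psi (phi p) = p.
Proof.
by apply: funext => k; apply: funext => a; rewrite /psi /phi mxvecE mxE.
Qed.

Definition Cset := [set v : 'rV[R]_(K * A) | in_Delta P (psi v)].

Lemma Cset_closed : closed Cset.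
Proof.
have -> : Cset = \bigcap_(i in [set: 'I_K * 'I_A])
     [set v : 'rV[R]_(K * A) | 0 <= v 0 (mxvec_index i.1 i.2)] `&`
   \bigcap_(k in [set: 'I_K])
     [set v : 'rV[R]_(K * A) | \sum_(a < A) v 0 (mxvec_index k a) = P k].
  apply/seteqP; split => v.
    move=> Dv; split => [[k a] _ /=|k _ /=].
      by case: (Dv k) => h _; exact: h a.
    by case: (Dv k).
  by move=> [h1 h2] k; split => [a|]; [exact: (h1 (k, a)) | exact: h2].
apply: closedI; apply: closed_bigI => i _.
  apply: (@preimage_closed _ _ (fun v : 'rV[R]_(K * A) => v 0 (mxvec_index i.1 i.2))
     [set x | 0 <= x]); last exact: closed_ge.
  by move=> v _; apply: coord_continuous.
apply: (@preimage_closed _ _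
    (fun v : 'rV[R]_(K * A) => \sum_(a < A) v 0 (mxvec_index i a)) [set x | x = P i]);
  last exact: closed_eq.
move=> v _; apply: cont_bigsum => a _; apply: coord_continuous.
Qed.

Lemma Cset_bounded : bounded_set Cset.
Proof.
exists (\sum_(k < K) P k); split; first exact: num_real.
move=> M /= hM v Cv.
have M0 : 0 <= M.
  apply: ltW; apply: le_lt_trans hM; apply: sumr_ge0 => k _; apply: ltW; exact: HP.
rewrite /Num.norm /= mx_normrE; apply/bigmax_leP; split => // [[i j]] _ /=.
rewrite ord1; case/mxvec_indexP: j => k a.
have [h0 hs] := Cv k.
have e0 : 0 <= psi v k a by apply: h0.
rewrite /psi in e0 *; rewrite ger0_norm //.
apply: ltW; apply: le_lt_trans hM.
apply: le_trans (_ : P k <= _).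
  rewrite -hs; exact: (@le_sum1 _ (fun a' => psi v k a') a h0).
exact: (@le_sum1 _ P k (fun j => ltW (HP j))).
Qed.

Lemma Cset_compact : compact Cset.
Proof. exact: bounded_closed_compact Cset_bounded Cset_closed. Qed.

Lemma Phi_psi_cont v : Cset v -> {for v, continuous (fun w => Phi (psi w))}.
Proof.
move=> Cv; have nv := Delta_nonneg (psi v) Cv.
rewrite /Phi; apply: cont_bigsum => a _.
have hS : {for v, continuous (fun w : 'rV[R]_(K * A) => Sld (psi w) a)}.
  rewrite /Sld.
  have h1 := cont_bigsum _ _ (index_enum 'I_K) predT
     (fun l (w : 'rV[R]_(K * A)) => g l a * psi w l a) v
     (fun l _ => continuousM (@cst_continuous _ _ (g l a) v) (@coord_continuous _ _ _ 0 (mxvec_index l a) v)).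
  exact: (continuousD (@cst_continuous _ _ (sigma2 a) v) h1).
have hl : {for v, continuous (fun w : 'rV[R]_(K * A) => ln (Sld (psi w) a))}.
  exact: (continuous_comp hS (continuous_ln (S_gt0 (psi v) a nv))).
exact: (continuousM (@cst_continuous _ _ (b a) v) hl).
Qed.

Lemma Hq_psi_cont v : Cset v -> {for v, continuous (fun w => Hq (psi v) (psi w))}.
Proof.
move=> Cv; have nv := Delta_nonneg (psi v) Cv.
rewrite /Hq; apply: cont_bigsum => k _; apply: cont_bigsum => a _.
rewrite /Hterm; case: (eqVneq (psi v k a) 0) => [e|ne].
  exact: cst_continuous.
have qp : 0 < psi v k a by rewrite lt0r ne nv.
have hl : {for v, continuous (fun w : 'rV[R]_(K * A) => ln (psi w k a))}.
  exact: (continuous_comp (@coord_continuous _ _ _ 0 (mxvec_index k a) v) (continuous_ln qp)).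
exact: (continuousM (@cst_continuous _ _ (psi v k a) v)
        (continuousB (@cst_continuous _ _ (ln (psi v k a)) v) hl)).
Qed.

Lemma Hq_self q : Hq q q = 0.
Proof.
rewrite /Hq big1 // => k _; rewrite big1 // => a _.
by rewrite /Hterm subrr mulr0; case: ifP.
Qed.

Lemma cluster_max q p : replicator_solution P b sigma2 g p -> qmax q ->
  supp q (p 0) ->
  exists v, Cset v /\ qmax (psi v) /\
    (forall B, nbhs v B -> forall T, exists t, T <= t /\ B (phi (p t))).
Proof.
move=> sol qm sq0.
pose D := [set x : R * R | 0 < x.2].
pose Bs := fun x : R * R =>
  [set t : R | x.1 <= t /\ 0 <= t /\ Phi q - x.2 < Phi (p t)].
have FF : Filter (filter_from D Bs).
  apply: filter_from_filter; first by exists (0, 1); rewrite /D /= ltr01.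
  move=> i j Di Dj; exists (Num.max i.1 j.1, Num.min i.2 j.2).
    by rewrite /D /= lt_min Di Dj.
  move=> t [/= h1 [h2 h3]]; move: h1; rewrite ge_max => /andP[h1 h1'].
  have m1 : Num.min i.2 j.2 <= i.2 by rewrite ge_min lexx.
  have m2 : Num.min i.2 j.2 <= j.2 by rewrite ge_min lexx orbT.
  by split; split => //; split => //; lra.
have PF : ProperFilter (filter_from D Bs).
  apply: filter_from_proper => x Dx.
  have [t [h1 h2]] := near_max q p sol qm sq0 x.2 Dx (Num.max x.1 0).
  exists t; move: h1; rewrite ge_max => /andP[h1 h1'].
  by split.
pose F := (fun t => phi (p t)) @ (filter_from D Bs).
have PFF : ProperFilter F by apply: fmap_proper_filter.
have FC : F Cset.
  exists (0, 1); first by rewrite /D /= ltr01.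
  move=> t [_ [t0 _]]; rewrite /= /Cset /= psi_phi; exact: sol.1 t t0.
have [v [Cv clv]] := Cset_compact F PFF FC.
have key : forall x, D x -> forall B, nbhs v B -> exists t, Bs x t /\ B (phi (p t)).
  move=> x Dx B nB.
  have FA : F ((fun t => phi (p t)) @` Bs x).
    by exists x => // t Bt; exists t.
  have [w [[t Bt <-] Bw]] := clv _ _ FA nB.
  by exists t.
exists v; split => //; split.
  split => // y Dy.
  have hq : Phi q <= Phi (psi v).
    rewrite leNgt; apply/negP => lt.
    set d := Phi q - Phi (psi v).
    have d0 : 0 < d by rewrite /d subr_gt0.
    have nB : nbhs v [set w | Phi (psi w) < Phi q - d / 2].
      apply: (cvgr_lt (Phi (psi v)) (Phi_psi_cont v Cv)).
      rewrite /d; lra.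
    have Dd : D (0, d / 2) by rewrite /D /=; lra.
    have [t [[_ [_ h1]] h2]] := key _ Dd _ nB.
    move: h2; rewrite /= psi_phi => h2.
    move: h1 => /=; lra.
  by apply: le_trans hq; apply: qm.2.
move=> B nB T.
have D1 : D (T, 1) by rewrite /D /= ltr01.
have [t [[h1 _] h2]] := key _ D1 _ nB.
by exists t.
Qed.

Lemma exists_max p : replicator_solution P b sigma2 g p -> exists m, qmax m.
Proof.
move=> sol.
have C0 : Cset !=set0.
  by exists (phi (p 0)); rewrite /Cset /= psi_phi; exact: sol.1 0 (lexx 0).
have cc : {within Cset, continuous (fun w => Phi (psi w))}.
  apply: continuous_in_subspaceT => v; rewrite inE => Cv.
  exact: Phi_psi_cont.
have [c cC cmax] := EVT_max_rV C0 Cset_compact cc.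
move: cC; rewrite inE => cC.
exists (psi c); split => // x Dx.
rewrite -(psi_phi x); apply: cmax; rewrite inE /Cset /= psi_phi //.
Qed.

Lemma cluster_conv v p : replicator_solution P b sigma2 g p -> Cset v ->
  qmax (psi v) -> supp (psi v) (p 0) ->
  (forall B, nbhs v B -> forall T, exists t, T <= t /\ B (phi (p t))) ->
  converges_to p (psi v).
Proof.
move=> sol Cv qv sv cl; apply: conv_lemma => // e e0 T.
have nB : nbhs v [set w | Hq (psi v) (psi w) < e].
  apply: (cvgr_lt (Hq (psi v) (psi v)) (Hq_psi_cont v Cv)).
  by rewrite Hq_self.
have [t [Tt h]] := cl _ nB T.
by exists t; split => //; move: h; rewrite /= psi_phi.
Qed.

Lemma main_result :
  (forall q : profile R K A, is_NE P b sigma2 g q ->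
     (forall q' : profile R K A, is_NE P b sigma2 g q' -> q' = q) ->
     forall p : R -> profile R K A, replicator_solution P b sigma2 g p ->
       (KL q (p 0%R) < +oo)%E -> converges_to p q)
  /\
  (forall p : R -> profile R K A, replicator_solution P b sigma2 g p ->
     in_interior P (p 0) ->
     exists q : profile R K A, is_NE P b sigma2 g q /\ converges_to p q).
Proof.
split.
  move=> q NEq uq p sol hKL.
  have [m [Dm mm]] := exists_max p sol.
  have em : m = q by apply: uq; apply: max_NE.
  subst m.
  have sq0 := KL_supp q (p 0) (Delta_nonneg (p 0) (sol.1 0 (lexx 0))) hKL.
  have [v [Cv [qv cl]]] := cluster_max q p sol (conj Dm mm) sq0.
  have ev : psi v = q by apply: uq; apply: max_NE; [exact: qv.1 | exact: qv.2].
  rewrite -ev; apply: cluster_conv => //; rewrite ev //.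
move=> p sol [D0 pos0].
have [m qm] := exists_max p sol.
have [v [Cv [qv cl]]] := cluster_max m p sol qm (fun k a _ => pos0 k a).
exists (psi v); split; first by apply: max_NE; [exact: qv.1 | exact: qv.2].
by apply: cluster_conv => // k a _; apply: pos0.
Qed.

End Proof.

Theorem theorem2 (R : realType) (K A : nat) (P : 'I_K -> R) (b sigma2 : 'I_A -> R)
    (g : 'I_K -> 'I_A -> R)
    (HP : forall k, 0 < P k) (Hb : forall a, 0 < b a) (Hs : forall a, 0 < sigma2 a)
    (Hg : forall k a, 0 < g k a) :
  (forall q : profile R K A, is_NE P b sigma2 g q ->
     (forall q' : profile R K A, is_NE P b sigma2 g q' -> q' = q) ->
     forall p : R -> profile R K A, replicator_solution P b sigma2 g p ->
       (KL q (p 0%R) < +oo)%E -> converges_to p q)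
  /\
  (forall p : R -> profile R K A, replicator_solution P b sigma2 g p ->
     in_interior P (p 0) ->
     exists q : profile R K A, is_NE P b sigma2 g q /\ converges_to p q).
Proof. by apply: main_result. Qed.
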